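(* For every $N\ge3$, $\mathcal G_1(N)\cap\mathcal G_2(N)=\emptyset$.
   Context: Board and moves: $G=(V,E)$ finite, simple, connected, undirected; $N\ge3$ tokens, cops $C_1,\dots,C_{N-1}$ and robber $R$ (token $N$). A state is $s=(x^1,\dots,x^N,n)$ with $x^i\in V$ the position of token $i$ and $n$ the token to move; $S^n$ is the set of states with token $n$ to move; $s$ is a capture state if $x^i=x^N$ for some $i\le N-1$, and $S_{nc}$ is the set of noncapture states. In each turn the token to move moves to a vertex of its closed neighbourhood; order $C_1,\dots,C_{N-1},R,C_1,\dots$. State cop number. For $s\in S_{nc}$, $c(G|s)=c_N(G|s)$ is the minimum $k\in\{1,\dots,N-1\}$ for which there exist $k$ cops and strategies for them such that, starting from $s$, a capture (by any cop) occurs whatever the other $N-k$ tokens (including $R$) do; $c(G|s)=\infty$ if no such $k$ exists. $c(G)$ is the classical cop number of $G$. Graph classes. $\mathcal G(N)=\{G: c(G)>N-1\}$; $\mathcal G_1(N)=\{G\in\mathcal G(N):\exists s\in S_{nc}\text{ with } c(G|s)\in\{2,\dots,N-1\}\}$; $\mathcal G_2(N)=\{G\in\mathcal G(N): c(G|s)=\infty\text{ for all } s\in S^N\cap S_{nc}\}$. *)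

(* Defs.v *)
From mathcomp Require Import all_boot.
Set Implicit Arguments. Unset Strict Implicit. Unset Printing Implicit Defensive.

Section CopsRobber.
Variable T : finType.
Variable e : rel T.
Variable N : nat.

Definition cnbr (x y : T) : bool := (x == y) || e x y.

(* Tokens are 'I_N : indices 0..N-2 are the cops C_1..C_{N-1},
   index N-1 is the robber R. *)
Definition isCop (i : 'I_N) : bool := (val i < N.-1).
Definition isRobber (i : 'I_N) : bool := (val i == N.-1).

(* A state: positions of the N tokens and the token to move. *)
Definition state : Type := ({ffun 'I_N -> T} * 'I_N)%type.
Definition pos (s : state) : {ffun 'I_N -> T} := s.1.
Definition tok (s : state) : 'I_N := s.2.

Definition capture (s : state) : Prop :=
  exists i j : 'I_N, isCop i /\ isRobber j /\ pos s i = pos s j.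
Definition noncapture (s : state) : Prop := ~ capture s.

(* One turn: token [tok s] moves within its closed neighbourhood, everybody
   else stays, and the turn passes to the next token cyclically
   (C_1,...,C_{N-1},R,C_1,...). *)
Definition step (s s' : state) : Prop :=
  tok s' = ordS (tok s) /\
  (forall j, j != tok s -> pos s' j = pos s j) /\
  cnbr (pos s (tok s)) (pos s' (tok s)).

(* A (history-dependent) strategy for a coalition K of tokens: given the
   history of previous states and the current state, the vertex the
   token to move goes to. It must be legal. *)
Definition strategy := seq state -> state -> T.
Definition legal_strategy (K : {set 'I_N}) (sigma : strategy) : Prop :=
  forall h s, tok s \in K -> cnbr (pos s (tok s)) (sigma h s).

Definition forces (K : {set 'I_N}) (s : state) : Prop :=
  exists sigma : strategy, legal_strategy K sigma /\
    forall p : nat -> state, p 0 = s ->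
      (forall t, step (p t) (p t.+1)) ->
      (forall t, tok (p t) \in K ->
         pos (p t.+1) (tok (p t)) = sigma [seq p i | i <- iota 0 t] (p t)) ->
      exists t, capture (p t).

Definition kcops_win (k : nat) (s : state) : Prop :=
  exists K : {set 'I_N}, (forall i, i \in K -> isCop i) /\ #|K| = k /\ forces K s.

(* c(G|s) = c, where c = Some k (k finite) or None (infinity) *)
Definition state_cop_number_is (s : state) (c : option nat) : Prop :=
  match c with
  | Some k => 1 <= k <= N.-1 /\ kcops_win k s /\
              forall k', 1 <= k' < k -> ~ kcops_win k' s
  | None => forall k, 1 <= k <= N.-1 -> ~ kcops_win k s
  end.

(* Classical game with k cops: cops place (C 0), robber places (R 0); then
   cops move simultaneously (C t.+1) and robber moves (R t.+1), etc. *)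
Definition cstate (k : nat) : Type := ({ffun 'I_k -> T} * T)%type.

Definition classical_cops_win (k : nat) : Prop :=
  exists (c0 : {ffun 'I_k -> T}) (sigma : seq (cstate k) -> cstate k -> {ffun 'I_k -> T}),
    (forall (h : seq (cstate k)) (c : {ffun 'I_k -> T}) (r : T) (i : 'I_k), cnbr (c i) (sigma h (c, r) i)) /\
    forall (C : nat -> {ffun 'I_k -> T}) (R : nat -> T),
      C 0 = c0 ->
      (forall t, C t.+1 = sigma [seq (C j, R j) | j <- iota 0 t] (C t, R t)) ->
      (forall t, cnbr (R t) (R t.+1)) ->
      exists t (i : 'I_k), C t i = R t \/ C t.+1 i = R t.

Definition cop_number_gt (m : nat) : Prop :=
  forall k, k <= m -> ~ classical_cops_win k.

Definition inG (n : nat) : Prop := cop_number_gt n.-1.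

Definition inG1 : Prop :=
  inG N /\ exists s : state, noncapture s /\
    exists k, 2 <= k <= N.-1 /\ state_cop_number_is s (Some k).

Definition inG2 : Prop :=
  inG N /\ forall s : state, isRobber (tok s) -> noncapture s ->
    state_cop_number_is s None.

End CopsRobber.

(* Main.v *)
Require Import Defs.
From mathcomp Require Import all_boot zify.
Set Implicit Arguments. Unset Strict Implicit.

Lemma stayL (T : finType) (e : rel T) (N : nat) (p : nat -> state T N) (j : 'I_N) u t :
  (forall w, step e (p w) (p w.+1)) -> u <= t ->
  (forall w, u <= w < t -> tok (p w) != j) -> pos (p t) j = pos (p u) j.
Proof.
move=> st; elim: t => [|t IH] ut H.
  by have -> : u = 0 by lia.
case: (ltnP u t.+1) => [lt|le]; last by have -> : u = t.+1 by lia.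
have [_ [E _]] := st t.
rewrite E; last by rewrite eq_sym; apply: (H t); lia.
apply: IH; first lia.
move=> w hw; apply: (H w); lia.
Qed.
Lemma tokL (T : finType) (e : rel T) (N : nat) (p : nat -> state T N) t :
  (forall w, step e (p w) (p w.+1)) -> nat_of_ord (tok (p 0)) + t < N ->
  nat_of_ord (tok (p t)) = nat_of_ord (tok (p 0)) + t.
Proof.
move=> st; elim: t => [|t IH] H; first by rewrite addn0.
have [E _] := st t.
rewrite E /= IH; last lia.
rewrite modn_small; lia.
Qed.
Definition nxt (T : finType) (N : nat) (K : {set 'I_N}) (sigma : strategy T N)
  (h : seq (state T N)) (x : state T N) : state T N :=
  ([ffun j => if (j == tok x) && (tok x \in K) then sigma h x else pos x j], ordS (tok x)).

Fixpoint hp (T : finType) (N : nat) (K : {set 'I_N}) (sigma : strategy T N)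
  (s : state T N) (n : nat) : seq (state T N) * state T N :=
  match n with
  | 0 => ([::], s)
  | n'.+1 => let hx := hp K sigma s n' in (rcons hx.1 hx.2, nxt K sigma hx.1 hx.2)
  end.

Lemma hp_hist (T : finType) (N : nat) (K : {set 'I_N}) (sigma : strategy T N) s t :
  (hp K sigma s t).1 = [seq (hp K sigma s i).2 | i <- iota 0 t].
Proof.
elim: t => [|t IH] //.
rewrite -(addn1 t) iotaD map_cat /= add0n addn1 /= IH.
by rewrite cats1.
Qed.

Lemma hp_step (T : finType) (e : rel T) (N : nat) (K : {set 'I_N}) (sigma : strategy T N) s t :
  legal_strategy e K sigma ->
  step e (hp K sigma s t).2 (hp K sigma s t.+1).2.
Proof.
move=> L; rewrite /step /=; split; first by [].
split.
  move=> j /negbTE hj; by rewrite /pos /= ffunE hj.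
rewrite /pos /= ffunE eqxx /=.
case: ifP => hK; first by apply: L.
by rewrite /cnbr eqxx.
Qed.

Lemma hp_cons (T : finType) (N : nat) (K : {set 'I_N}) (sigma : strategy T N) s t :
  tok (hp K sigma s t).2 \in K ->
  pos (hp K sigma s t.+1).2 (tok (hp K sigma s t).2) =
  sigma [seq (hp K sigma s i).2 | i <- iota 0 t] (hp K sigma s t).2.
Proof.
move=> hK; rewrite /= /pos /= ffunE eqxx hK /=.
by rewrite -hp_hist.
Qed.

Lemma hist_lo (A : Type) (q p' : nat -> A) m t : t <= m ->
  [seq (if i < m then q i else p' (i - m)) | i <- iota 0 t] = [seq q i | i <- iota 0 t].
Proof.
move=> tm; apply/eq_in_map => i; rewrite mem_iota => /andP [_ hi].
by rewrite ifT //; lia.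
Qed.

Lemma hist_hi (A : Type) (q p' : nat -> A) m t : m <= t ->
  [seq (if i < m then q i else p' (i - m)) | i <- iota 0 t] =
  [seq q i | i <- iota 0 m] ++ [seq p' i | i <- iota 0 (t - m)].
Proof.
move=> mt; have -> : t = m + (t - m) by lia.
rewrite iotaD map_cat hist_lo // add0n -(addn0 m) iotaDl addn0 -map_comp.
have -> : m + (t - m) - m = t - m by lia.
f_equal. elim: (iota 0 (t - m)) => //= i l ->.
have -> : (m + i < m) = false by apply/negbTE; lia.
by rewrite addKn.
Qed.

Lemma splice (T : finType) (e : rel T) (N : nat) (K : {set 'I_N}) (sigma : strategy T N)
  (q p' : nat -> state T N) m :
  (forall t, step e (q t) (q t.+1)) ->
  (forall t, tok (q t) \in K -> pos (q t.+1) (tok (q t)) = sigma [seq q i | i <- iota 0 t] (q t)) ->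
  p' 0 = q m -> (forall t, step e (p' t) (p' t.+1)) ->
  (forall t, tok (p' t) \in K -> pos (p' t.+1) (tok (p' t)) =
       sigma ([seq q i | i <- iota 0 m] ++ [seq p' i | i <- iota 0 t]) (p' t)) ->
  (forall t, step e ((fun t => if t < m then q t else p' (t - m)) t)
                    ((fun t => if t < m then q t else p' (t - m)) t.+1)) /\
  (forall t, tok ((fun t => if t < m then q t else p' (t - m)) t) \in K ->
     pos ((fun t => if t < m then q t else p' (t - m)) t.+1)
         (tok ((fun t => if t < m then q t else p' (t - m)) t)) =
     sigma [seq (fun t => if t < m then q t else p' (t - m)) i | i <- iota 0 t]
           ((fun t => if t < m then q t else p' (t - m)) t)).
Proof.
move=> qs qc p0 ps pc; split.
  move=> t /=; case: (ltnP t.+1 m) => h1.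
    have h2 : t < m by lia.
    rewrite ?h1 ?h2; exact: qs.
  case: (ltnP t m) => h2.
    have E : t.+1 = m by lia.
    have F : (m < m) = false by apply/negbTE; lia.
    rewrite ?h2 E ?F subnn p0 -E; exact: qs.
  have F1 : (t < m) = false by apply/negbTE; lia.
  have F2 : (t.+1 < m) = false by apply/negbTE; lia.
  rewrite ?F1 ?F2.
  have -> : t.+1 - m = (t - m).+1 by lia.
  exact: ps.
move=> t /=; case: (ltnP t m) => h2.
  rewrite hist_lo; last lia.
  rewrite ?h2.
  case: (ltnP t.+1 m) => h1.
    by rewrite ?h1; apply: qc.
  have E : t.+1 = m by lia.
  have F : (m < m) = false by apply/negbTE; lia.
  rewrite E ?F subnn p0 -E; apply: qc.
have F1 : (t < m) = false by apply/negbTE; lia.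
have F2 : (t.+1 < m) = false by apply/negbTE; lia.
rewrite ?F1 ?F2 hist_hi //.
have -> : t.+1 - m = (t - m).+1 by lia.
exact: pc.
Qed.

Lemma neqO (N : nat) (x y : 'I_N) : nat_of_ord x <> nat_of_ord y -> x != y.
Proof. by move=> H; apply/eqP => E; apply: H; rewrite E. Qed.

Theorem mainTheorem8 (T : finType) (e : rel T) (N : nat) :
  symmetric e -> irreflexive e -> (forall x y : T, connect e x y) ->
  3 <= N ->
  ~ (inG1 e N /\ inG2 e N).
Proof.
move=> _ _ _ N3 [[_ [s [ncs [k [k2 [[k1 [win notwin]]]]]]]] [_ G2]].
have rN : N.-1 < N by lia.
pose rob : 'I_N := Ordinal rN.
have robE : forall j : 'I_N, isRobber j -> j = rob.
  by move=> j /eqP hj; apply: ord_inj.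
pose a := nat_of_ord (tok s).
have aN : a < N by exact: ltn_ord.
case: (boolP [exists i : 'I_N, [&& isCop i, a <= i & cnbr e (pos s i) (pos s rob)]]).
  move=> /existsP [i /and3P [ci ai ni]].
  have ciN : nat_of_ord i < N.-1 by exact: ci.
  apply: (notwin 1); first lia.
  exists [set i]; split; first by move=> j; rewrite inE => /eqP ->.
  split; first by rewrite cards1.
  exists (fun (h : seq (state T N)) (x : state T N) =>
            if cnbr e (pos x (tok x)) (pos x rob) then pos x rob else pos x (tok x)).
  split.
    move=> h x _ /=; case: ifP => // _; by rewrite /cnbr eqxx.
  move=> p p0 ps pc.
  pose u := nat_of_ord i - a.
  have tu : tok (p u) = i.
    apply: ord_inj; rewrite (tokL (e:=e)) // p0 -/a; lia.
  have pi : pos (p u) i = pos s i.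
    rewrite (stayL (e:=e) (u:=0)) ?p0 //.
    move=> w hw; apply: neqO; rewrite (tokL (e:=e)) // p0 -/a; lia.
  have pr : pos (p u) rob = pos s rob.
    rewrite (stayL (e:=e) (u:=0)) ?p0 //.
    move=> w hw; apply: neqO; rewrite (tokL (e:=e)) // p0 -/a /=; lia.
  exists u.+1, i, rob; split; first exact: ci.
  split; first by rewrite /isRobber /=.
  have [_ [E _]] := ps u.
  rewrite (E rob); last by rewrite tu eq_sym; apply: neqO => /=; lia.
  have := pc u; rewrite tu inE eqxx => /(_ isT) ->.
  by rewrite pi pr ni.
move=> /existsPn nex.
case: win => K [Kc [Kk [sigma [L Hf]]]].
pose q t := (hp K sigma s t).2.
have q0 : q 0 = s by [].
have qs : forall t, step e (q t) (q t.+1) by move=> t; apply: hp_step.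
have qc : forall t, tok (q t) \in K -> pos (q t.+1) (tok (q t)) = sigma [seq q i | i <- iota 0 t] (q t).
  by move=> t; apply: hp_cons.
pose m := N.-1 - a.
have qtok : forall t, t <= m -> nat_of_ord (tok (q t)) = a + t.
  by move=> t tm; rewrite (tokL (e:=e)) // q0 -/a; lia.
have qr : forall t, t <= m -> pos (q t) rob = pos s rob.
  move=> t tm; rewrite (stayL (e:=e) (u:=0)) //.
  move=> w hw; apply: neqO; rewrite qtok /=; lia.
have qnc : forall t, t <= m -> noncapture (q t).
  move=> t tm [i [j [ci [rj eij]]]].
  move: eij; rewrite (robE j rj) qr // => eij.
  have ciN : nat_of_ord i < N.-1 by exact: ci.
  case: (boolP ((a <= i) && (nat_of_ord i - a < t))) => [/andP [ai it] | hn].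
    pose u := nat_of_ord i - a.
    have tu : tok (q u) = i by apply: ord_inj; rewrite qtok; lia.
    have p1 : pos (q t) i = pos (q u.+1) i.
      rewrite (stayL (e:=e) (u:=u.+1)) //.
      move=> w hw; apply: neqO; rewrite qtok; lia.
    have p2 : pos (q u) i = pos s i.
      rewrite (stayL (e:=e) (u:=0)) //.
      move=> w hw; apply: neqO; rewrite qtok; lia.
    have [_ [_ C]] := qs u.
    move: C; rewrite tu p2 -p1 eij => C.
    by move: (nex i); rewrite ci ai C.
  apply: ncs; exists i, rob; split; first exact: ci.
  split; first by rewrite /isRobber /=.
  rewrite -eij (stayL (e:=e) (u:=0)) //.
  move=> w hw; apply: neqO; rewrite qtok; lia.
have tm : isRobber (tok (q m)) by change (nat_of_ord (tok (q m)) == N.-1); rewrite qtok //; apply/eqP; lia.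
apply: (G2 (q m) tm (qnc m (leqnn m)) k k1).
exists K; split; first exact: Kc.
split; first exact: Kk.
exists (fun h x => sigma ([seq q i | i <- iota 0 m] ++ h) x).
split; first by move=> h x hx; apply: L.
move=> p' p0 ps pc.
have [PS PC] := splice qs qc p0 ps pc.
have P0 : (fun t => if t < m then q t else p' (t - m)) 0 = s.
  rewrite /=; case: ifP => // /negbT; rewrite -leqNgt leqn0 => /eqP m0.
  by rewrite ?sub0n p0 m0.
have [t ct] := Hf _ P0 PS PC.
move: ct => /=; case: (ltnP t m) => ht ct.
  by case: (qnc t (ltnW ht)).
by exists (t - m).
Qed.
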